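(* For $k\ge2$ the following hold (with the convention $\Gamma_{k,r}(d,j)=0$ if $r<0$, $r>k$ or $d>k$). For $d\ge1$: $\Gamma_{k,r}(d,1)=\Gamma_{k-1,r-1}(d,2)+\Gamma_{k-1,r}(d-1,1)+\Gamma_{k-1,r}(d,2)$, $\Gamma_{k,r}(d,2)=\Gamma_{k-1,r-1}(d,1)+2\Gamma_{k-1,r}(d+1,2)$, $\Gamma_{k,r}(d,3)=\Gamma_{k-1,r-1}(d,4)+2\Gamma_{k-1,r}(d+1,3)$, $\Gamma_{k,r}(d,4)=\Gamma_{k-1,r-1}(d,3)+\Gamma_{k-1,r}(d-1,4)+\Gamma_{k-1,r}(d,3)$. For $d=0$: $\Gamma_{k,r}(0,1)=\Gamma_{k-1,r-1}(0,2)+2\Gamma_{k-1,r}(1,3)$, $\Gamma_{k,r}(0,2)=\Gamma_{k-1,r-1}(0,1)+2\Gamma_{k-1,r}(1,2)$, $\Gamma_{k,r}(0,3)=\Gamma_{k-1,r-1}(0,4)+2\Gamma_{k-1,r}(1,3)$, $\Gamma_{k,r}(0,4)=\Gamma_{k-1,r-1}(0,3)+2\Gamma_{k-1,r}(1,2)$.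
   Context: $\mathcal B$ is the $2$-regular Bethe lattice (infinite tree, every node of degree $3$), a metric graph with edges of length $1$; $m(B)$ is the midpoint of edge $B$, $\mathrm{dist}$ the path distance. Each edge has two orientations, $-\vec C$ the opposite of $\vec C$; $\vec C\to\vec D$ means the terminal node of $\vec C$ is the initial node of $\vec D$. A path of length $k\ge1$ from $\vec A$ to $\vec B$ is a tuple $(\vec C_0,\dots,\vec C_k)$ with $\vec C_0=\vec A$, $\vec C_k=\vec B$ and $\vec C_i\to\vec C_{i+1}$ for all $i$; an inversion is an index $i$ with $\vec C_{i+1}=-\vec C_i$. Types of $(\vec A,\vec B)$ with $d=\mathrm{dist}(m(A),m(B))\ge1$: $\vec A$ points toward $B$ if its terminal node lies on the geodesic from $m(A)$ to $m(B)$; $\vec B$ points away from $A$ if its initial node lies on that geodesic. Type 1: $\vec A$ toward, $\vec B$ away; type 2: $\vec A$ toward, $\vec B$ toward $A$; type 3: $\vec A$ away from $B$, $\vec B$ toward $A$; type 4: $\vec A$ away, $\vec B$ away. For $d=0$, types 1 and 3 mean $\vec B=\vec A$, types 2 and 4 mean $\vec B=-\vec A$. $\Gamma_{k,r}(d,j)$ is the number of paths of length $k$ with exactly $r$ inversions from $\vec A$ to $\vec B$, where $(\vec A,\vec B)$ is any pair at distance $d$ of type $j$ (this number depends only on $k,r,d,j$). *)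

(* Defs.v *)
(* Model of the 2-regular Bethe lattice (3-regular tree):
   the Cayley graph of Z/2 * Z/2 * Z/2, vertices = reduced words over 'I_3
   (no two consecutive letters equal), edges {w, w.g}. *)
From HB Require Import structures.
From mathcomp Require Import all_boot all_order all_algebra.
From Stdlib Require Import ClassicalEpsilon.
Set Implicit Arguments. Unset Strict Implicit. Unset Printing Implicit Defensive.

Definition vert := seq 'I_3.
Definition reduced (w : vert) : bool := sorted (fun a b : 'I_3 => a != b) w.

Definition vmul (w : vert) (g : 'I_3) : vert :=
  match rev w with
  | g' :: t => if g' == g then rev t else rcons w g
  | [::] => [:: g]
  end.

Fixpoint lcp (u v : vert) : nat :=
  match u, v with
  | x :: u', y :: v' => if x == y then (lcp u' v').+1 else 0
  | _, _ => 0
  end.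
Definition vdist (u v : vert) : nat := size u + size v - 2 * lcp u v.

(* oriented edges: (initial node w, colour g), from w to vmul w g *)
Definition oedge := (vert * 'I_3)%type.
Definition valid (C : oedge) : bool := reduced C.1.
Definition init (C : oedge) : vert := C.1.
Definition term (C : oedge) : vert := vmul C.1 C.2.
Definition opp (C : oedge) : oedge := (term C, C.2).
Definition same_edge (A B : oedge) : bool := (A == B) || (A == opp B).

(* Distances in the metric graph (edges of length 1).  Doubled quantities
   are used to stay in nat. *)
Definition middist (A B : oedge) : nat :=
  if same_edge A B then 0
  else (minn (minn (vdist (init A) (init B)) (vdist (init A) (term B)))
             (minn (vdist (term A) (init B)) (vdist (term A) (term B)))).+1.
(* 2 * dist(m(A), v) for a node v *)
Definition d2mv (A : oedge) (v : vert) : nat :=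
  (2 * minn (vdist (init A) v) (vdist (term A) v)).+1.
Definition on_geod (A B : oedge) (v : vert) : bool :=
  d2mv A v + d2mv B v == 2 * middist A B.

Definition has_type (d j : nat) (A B : oedge) : bool :=
  [&& valid A, valid B, middist A B == d &
  if d == 0 then
    (if (j == 1) || (j == 3) then B == A
     else if (j == 2) || (j == 4) then B == opp A else false)
  else match j with
    | 1 => on_geod A B (term A) && on_geod A B (init B)   (* A toward, B away *)
    | 2 => on_geod A B (term A) && on_geod A B (term B)   (* A toward, B toward *)
    | 3 => on_geod A B (init A) && on_geod A B (term B)   (* A away, B toward *)
    | 4 => on_geod A B (init A) && on_geod A B (init B)   (* A away, B away *)
    | _ => false
    end].

Definition arrow (C D : oedge) : bool := init D == term C.

(* Since
   C -> D iff D = (term C, D.2), paths of length k starting at A are in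
   bijection with colour sequences h of length k (see walk_path). *)
Fixpoint walk (A : oedge) (hs : seq 'I_3) : seq oedge :=
  A :: (if hs is h :: t then walk (term A, h) t else [::]).

Lemma walk_path A hs : path arrow A (behead (walk A hs)).
Proof.
elim: hs A => [|h t IH] A //=.
have := IH (term A, h).
by case: t {IH} => [|h' t'] /= => [_|->]; rewrite /arrow /init /= eqxx.
Qed.

Definition inversions (s : seq oedge) : nat :=
  count (fun p : oedge * oedge => p.2 == opp p.1) (zip s (behead s)).

Definition npaths (k r : nat) (A B : oedge) : nat :=
  #|[pred t : k.-tuple 'I_3 |
      let s := walk A t in (last A s == B) && (inversions s == r)]|.

Definition oedge0 : oedge := ([::], ord0).

Definition Gamma (k : nat) (r : int) (d j : nat) : nat :=
  let p := epsilon (inhabits (oedge0, oedge0))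
                   (fun p : oedge * oedge => has_type d j p.1 p.2) in
  match r with
  | Posz r' => npaths k r' p.1 p.2
  | Negz _ => 0
  end.

(* Main.v *)
Require Import Defs.
From mathcomp Require Import all_boot all_order all_algebra.
From mathcomp Require Import zify.
From Stdlib Require Import ClassicalEpsilon.
Set Implicit Arguments. Unset Strict Implicit. Unset Printing Implicit Defensive.
Local Notation opp := Defs.opp.

Lemma vmul_rcons (w : vert) g : vmul (rcons w g) g = w.
Proof. by rewrite /vmul rev_rcons eqxx revK. Qed.

Lemma vmul_nrcons (w : vert) g : last g w != g -> vmul w g = rcons w g.
Proof.
case/lastP: w => [|w x] //=; rewrite last_rcons /vmul rev_rcons => /negbTE -> //.
Qed.

Lemma vmul_nrcons' (w : vert) g : (w == [::]) || (last g w != g) -> vmul w g = rcons w g.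
Proof. by case/orP => [/eqP ->|] //; apply: vmul_nrcons. Qed.

Lemma reduced_rcons (w : vert) g :
  reduced (rcons w g) = reduced w && ((w == [::]) || (last g w != g)).
Proof.
rewrite /reduced; case: w => [|a w] //=.
by rewrite rcons_path.
Qed.

Lemma reduced_rconsl (w : vert) g : reduced (rcons w g) -> reduced w.
Proof. by rewrite reduced_rcons => /andP[]. Qed.

Lemma reduced_vmul (w : vert) g : reduced w -> reduced (vmul w g).
Proof.
case/lastP: w => [|w x] //.
case: (eqVneq x g) => [->|ne].
  by rewrite vmul_rcons; apply: reduced_rconsl.
rewrite vmul_nrcons ?last_rcons // => H.
by rewrite reduced_rcons H last_rcons ne orbT.
Qed.

Lemma vmulK (w : vert) g : reduced w -> vmul (vmul w g) g = w.
Proof.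
case/lastP: w => [|w x]; first by rewrite /vmul /= eqxx.
case: (eqVneq x g) => [->|ne].
  rewrite vmul_rcons; case: w => [|a w] H; first by [].
  rewrite vmul_nrcons //.
  by move: H; rewrite reduced_rcons => /andP[_].
by rewrite (@vmul_nrcons (rcons w x)) ?last_rcons // vmul_rcons.
Qed.

Definition mul (u v : vert) : vert := foldl vmul u v.

Lemma mul_rcons u v g : mul u (rcons v g) = vmul (mul u v) g.
Proof. by rewrite /mul foldl_rcons. Qed.

Lemma reduced_mul u v : reduced u -> reduced (mul u v).
Proof.
elim/last_ind: v => [|v g IH] // Hu.
by rewrite mul_rcons; apply: reduced_vmul; apply: IH.
Qed.

Lemma mul_cat (s t : vert) : reduced (s ++ t) -> mul s t = s ++ t.
Proof.
elim/last_ind: t => [|t g IH]; first by rewrite cats0.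
rewrite -rcons_cat => H; rewrite mul_rcons IH; last exact: reduced_rconsl H.
rewrite vmul_nrcons' //.
by move: H; rewrite reduced_rcons => /andP[_].
Qed.

Lemma mul0 v : reduced v -> mul [::] v = v.
Proof. by move=> H; rewrite mul_cat. Qed.

Lemma mulv0 v : mul v [::] = v.
Proof. by []. Qed.

Lemma mul_vmul u y g : reduced u -> reduced y ->
  mul u (vmul y g) = vmul (mul u y) g.
Proof.
move=> Hu; case/lastP: y => [|y x]; first by rewrite /vmul /=.
case: (eqVneq x g) => [->|ne] Hy.
  by rewrite vmul_rcons mul_rcons vmulK //; apply: reduced_mul.
by rewrite vmul_nrcons ?last_rcons // mul_rcons.
Qed.

Lemma mulA u v w : reduced u -> reduced v -> mul u (mul v w) = mul (mul u v) w.
Proof.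
move=> Hu Hv; elim/last_ind: w => [|w g IH] //.
rewrite !mul_rcons mul_vmul ?IH //; exact: reduced_mul.
Qed.

Lemma reduced_rev v : reduced (rev v) = reduced v.
Proof.
rewrite /reduced rev_sorted; case: v => [|a v] //=.
by elim: v a => //= b v IH a; rewrite IH eq_sym.
Qed.

Lemma mulV v : reduced v -> mul v (rev v) = [::].
Proof.
elim/last_ind: v => [|v g IH] // H.
by rewrite rev_rcons /mul /= vmul_rcons; apply: IH; apply: reduced_rconsl H.
Qed.

Lemma mulVl v : reduced v -> mul (rev v) v = [::].
Proof.
by move=> H; rewrite -{2}(revK v) mulV // reduced_rev.
Qed.

Lemma mul_inv_uniq a b : reduced a -> reduced b -> mul a b = [::] -> b = rev a.
Proof.
move=> Ha Hb H.
by rewrite -(mul0 Hb) -(mulVl Ha) -mulA ?reduced_rev // H.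
Qed.

Lemma mul_cancel x u v : reduced x -> reduced u -> reduced v ->
  mul x u = mul x v -> u = v.
Proof.
move=> Hx Hu Hv H.
by rewrite -(mul0 Hu) -(mul0 Hv) -(mulVl Hx) -!mulA ?reduced_rev // H.
Qed.

Lemma rev_mul x u : reduced x -> reduced u -> rev (mul x u) = mul (rev u) (rev x).
Proof.
move=> Hx Hu; symmetry; apply: mul_inv_uniq.
- exact: reduced_mul.
- by apply: reduced_mul; rewrite reduced_rev.
rewrite (@mulA (mul x u) (rev u)) ?reduced_mul ?reduced_rev //.
by rewrite -(mulA _ Hx Hu) mulV // mulv0 mulV.
Qed.

Lemma vdist_mul u v : reduced u -> reduced v -> vdist u v = size (mul (rev u) v).
Proof.
elim: u v => [|x u IH] v Hu Hv.
  by rewrite /vdist /= mul0 // muln0 subn0.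
case: v Hv => [|y v] Hv.
  by rewrite /vdist /mul /= muln0 subn0 addn0 size_rev.
have Hu' : reduced u by move: Hu; rewrite /reduced /=; case: u {IH} => //= a u /andP[].
have Hv' : reduced v by move: Hv; rewrite /reduced /=; case: v => //= a v /andP[].
rewrite rev_cons /mul /=.
case: (eqVneq x y) => [<-|ne].
  rewrite vmul_rcons -/(mul _ _) -IH // /vdist /= eqxx.
  rewrite mulnS !addSn addnS subSS subSS. done.
rewrite vmul_nrcons ?last_rcons // -/(mul _ _) mul_cat.
  rewrite /vdist /= (negbTE ne) size_cat !size_rcons size_rev muln0 subn0.
  by rewrite addSn addnS.
rewrite /reduced cat_rcons -rev_cons sorted_cat_cons; apply/andP; split; last exact: Hv.
by rewrite -/(reduced _) reduced_rcons reduced_rev Hu rev_cons last_rcons ne orbT.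
Qed.

Lemma vdist_tr x u v : reduced x -> reduced u -> reduced v ->
  vdist (mul x u) (mul x v) = vdist u v.
Proof.
move=> Hx Hu Hv; rewrite !vdist_mul ?reduced_mul // rev_mul //.
rewrite -mulA ?reduced_rev // (@mulA (rev x) x) ?reduced_rev //.
by rewrite mulVl // mul0.
Qed.

Definition tr (x : vert) (C : oedge) : oedge := (mul x C.1, C.2).

Lemma valid_tr x C : reduced x -> valid (tr x C).
Proof. by move=> Hx; apply: reduced_mul. Qed.

Lemma valid_term C : valid C -> reduced (term C).
Proof. by move=> H; apply: reduced_vmul. Qed.

Lemma valid_opp C : valid C -> valid (opp C).
Proof. exact: valid_term. Qed.

Lemma term_tr x C : reduced x -> valid C -> term (tr x C) = mul x (term C).
Proof. by move=> Hx HC; rewrite /term /= mul_vmul. Qed.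

Lemma init_tr x C : init (tr x C) = mul x (init C).
Proof. by []. Qed.

Lemma opp_tr x C : reduced x -> valid C -> opp (tr x C) = tr x (opp C).
Proof. by move=> Hx HC; rewrite /opp term_tr. Qed.

Lemma tr_inj x C D : reduced x -> valid C -> valid D -> (tr x C == tr x D) = (C == D).
Proof.
move=> Hx HC HD; apply/eqP/eqP => [|-> //].
case: C D HC HD => [c g] [d h] HC HD [] E ->.
by have /= -> := mul_cancel Hx HC HD E.
Qed.

Lemma opp_opp C : valid C -> opp (opp C) = C.
Proof. by case: C => c g H; rewrite /opp /term /= vmulK. Qed.

Lemma same_edge_tr x A B : reduced x -> valid A -> valid B ->
  same_edge (tr x A) (tr x B) = same_edge A B.
Proof.
move=> Hx HA HB; rewrite /same_edge opp_tr // !tr_inj //; exact: valid_opp.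
Qed.

Lemma middist_tr x A B : reduced x -> valid A -> valid B ->
  middist (tr x A) (tr x B) = middist A B.
Proof.
move=> Hx HA HB; rewrite /middist same_edge_tr // !term_tr // !init_tr.
by rewrite !vdist_tr //; apply: valid_term.
Qed.

Lemma d2mv_tr x A v : reduced x -> valid A -> reduced v ->
  d2mv (tr x A) (mul x v) = d2mv A v.
Proof.
move=> Hx HA Hv; rewrite /d2mv term_tr // init_tr !vdist_tr //; exact: valid_term.
Qed.

Lemma on_geod_tr x A B v : reduced x -> valid A -> valid B -> reduced v ->
  on_geod (tr x A) (tr x B) (mul x v) = on_geod A B v.
Proof.
by move=> Hx HA HB Hv; rewrite /on_geod !d2mv_tr // middist_tr.
Qed.

Lemma has_type_tr x d j A B : reduced x -> valid A -> valid B ->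
  has_type d j (tr x A) (tr x B) = has_type d j A B.
Proof.
move=> Hx HA HB; rewrite /has_type !valid_tr // HA HB middist_tr //.
rewrite opp_tr // !tr_inj //; last exact: valid_opp.
rewrite !term_tr // !init_tr !on_geod_tr //; exact: valid_term.
Qed.


Lemma npaths_sum k r A B : npaths k r A B =
  \sum_(t : k.-tuple 'I_3) ((last A (walk A t) == B) && (inversions (walk A t) == r)).
Proof.
rewrite /npaths -sum1_card big_mkcond /=; apply: eq_bigr => t _.
by rewrite inE; case: ifP.
Qed.

Definition sh (e : bool) (f : nat -> nat) r :=
  if e then (if r is r'.+1 then f r' else 0) else f r.

Definition nps k r (e : bool) C B := sh e (fun r => npaths k r C B) r.

Lemma sh_ext e f g r : (forall r, f r = g r) -> sh e f r = sh e g r.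
Proof. by move=> H; rewrite /sh; case: e; case: r. Qed.

Lemma sh_sum e (F : 'I_3 -> nat -> nat) r :
  sh e (fun r => \sum_(c < 3) F c r) r = \sum_(c < 3) sh e (F c) r.
Proof. by rewrite /sh; case: e; case: r => // *; rewrite big1. Qed.

Lemma sh_comm e1 e2 f r :
  sh e1 (fun r => sh e2 f r) r = sh e2 (fun r => sh e1 f r) r.
Proof. by rewrite /sh; case: e1; case: e2; case: r => // [] []. Qed.

Lemma walk_head A t : exists s, walk A t = A :: s.
Proof. by case: t => [|h t] /=; eexists. Qed.

Lemma walk_cons_last A h t :
  last A (walk A (h :: t)) = last (term A, h) (walk (term A, h) t).
Proof. by rewrite [walk A _]/=; have [s ->] := walk_head (term A, h) t. Qed.

Lemma walk_cons_inv A h t :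
  inversions (walk A (h :: t)) = (h == A.2) + inversions (walk (term A, h) t).
Proof.
rewrite [walk A _]/=; have [s ->] := walk_head (term A, h) t.
by rewrite /inversions /= /opp xpair_eqE eqxx.
Qed.

Lemma npaths_first k r A B :
  npaths k.+1 r A B = \sum_(h < 3) nps k r (h == A.2) (term A, h) B.
Proof.
rewrite npaths_sum.
pose f (p : 'I_3 * k.-tuple 'I_3) : k.+1.-tuple 'I_3 := [tuple of p.1 :: p.2].
pose g (t : k.+1.-tuple 'I_3) := (thead t, [tuple of behead t]).
have bij_f : bijective f.
  exists g => [[h t]|t]; rewrite /f /g /=.
    by rewrite theadE; congr (_, _); apply: val_inj.
  by rewrite [in RHS](tuple_eta t).
rewrite (reindex f); last exact: onW_bij.
pose G h (t : k.-tuple 'I_3) := nat_of_bool ((last A (walk A (h :: t)) == B) &&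
    (inversions (walk A (h :: t)) == r)).
transitivity (\sum_p G p.1 p.2); first by [].
rewrite -pair_bigA /=; apply: eq_bigr => h _.
rewrite /G /nps /sh; case E: (h == A.2); last first.
  by rewrite npaths_sum; apply: eq_bigr => t _; rewrite walk_cons_last walk_cons_inv E.
clear G; case: r => [|r].
  by apply: big1 => t _; rewrite walk_cons_inv E andbF.
by rewrite npaths_sum; apply: eq_bigr => t _; rewrite walk_cons_last walk_cons_inv E.
Qed.


Definition P (c : 'I_3) (B : oedge) : oedge := (vmul (init B) c, c).

Lemma npaths0 r C B : npaths 0 r C B = (C == B) && (r == 0).
Proof.
rewrite npaths_sum (big_pred1 [tuple]); first by rewrite /inversions /= [0 == r]eq_sym.
by move=> t; symmetry; apply/eqP; apply: tuple0.
Qed.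

Lemma nps0 r e C B : nps 0 r e C B = (C == B) && (r == e).
Proof. by rewrite /nps /sh; case: e; case: r => [|r]; rewrite ?npaths0 ?andbF. Qed.

Lemma sum_pick (b : 'I_3) (F : 'I_3 -> bool) :
  (forall h, h != b -> F h = false) -> \sum_(h < 3) (F h : nat) = F b.
Proof.
move=> H; rewrite (bigD1 b) //= big1 ?addn0 // => i /H -> //.
Qed.

Lemma npaths_last k r A B : valid A -> valid B ->
  npaths k.+1 r A B = \sum_(c < 3) nps k r (c == B.2) A (P c B).
Proof.
elim: k r A => [|k IH] r A HA HB.
  case: A HA => a al HA; case: B HB => b be HB.
  rewrite npaths_first /=.
  under eq_bigr => h _ do rewrite nps0 xpair_eqE.
  under [RHS]eq_bigr => c _ do rewrite nps0 /P /init /= xpair_eqE.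
  rewrite (@sum_pick be); last by move=> h /negbTE ->; rewrite andbF.
  rewrite (@sum_pick al); last by move=> h; rewrite eq_sym => /negbTE ->; rewrite andbF.
  rewrite !eqxx !andbT [al == be]eq_sym; congr (_ && _).
  rewrite /term /=; apply/eqP/eqP => [<-|->]; by rewrite vmulK.
rewrite npaths_first.
transitivity (\sum_(h < 3) \sum_(c < 3) sh (h == A.2) (fun r =>
   sh (c == B.2) (fun r => npaths k r (term A, h) (P c B)) r) r).
  apply: eq_bigr => h _; rewrite /nps -sh_sum; apply: sh_ext => r'.
  by apply: IH => //; apply: valid_term.
rewrite exchange_big; apply: eq_bigr => c _.
rewrite /nps; under [RHS]sh_ext => r' do rewrite npaths_first.
rewrite sh_sum; apply: eq_bigr => h _; exact: sh_comm.
Qed.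


Definition mkE (p : vert) (g : 'I_3) (up : bool) : oedge :=
  if up then (rcons p g, g) else (p, g).

Lemma term_mkE p g up : reduced (rcons p g) ->
  term (mkE p g up) = if up then p else rcons p g.
Proof.
move=> H; rewrite /mkE /term; case: up => /=; first exact: vmul_rcons.
by apply: vmul_nrcons'; move: H; rewrite reduced_rcons => /andP[_].
Qed.

Lemma init_mkE p g up : init (mkE p g up) = if up then rcons p g else p.
Proof. by case: up. Qed.

Lemma valid_mkE p g up : reduced (rcons p g) -> valid (mkE p g up).
Proof. by case: up => //= /reduced_rconsl. Qed.

Lemma opp_mkE p g up : reduced (rcons p g) -> opp (mkE p g up) = mkE p g (~~ up).
Proof. by move=> H; rewrite /opp term_mkE //; case: up. Qed.

Lemma lcp_refl (u : vert) : lcp u u = size u.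
Proof. by elim: u => //= a u ->; rewrite eqxx. Qed.

Lemma vdist_refl u : vdist u u = 0.
Proof. by rewrite /vdist lcp_refl addnn -mul2n subnn. Qed.

Lemma vdist_nil_l u : vdist [::] u = size u.
Proof. by rewrite /vdist /= muln0 subn0. Qed.

Lemma lcp_nil_r (u : vert) : lcp u [::] = 0.
Proof. by case: u. Qed.

Lemma vdist_nil_r (u : vert) : vdist u [::] = size u.
Proof. by rewrite /vdist; case: u => [|a u] /=; rewrite muln0 subn0 ?addn0. Qed.

Definition hb (x : 'I_3) (u : vert) := if u is y :: _ then y == x else false.

Lemma vdist1_l x u : vdist [:: x] u = if hb x u then (size u).-1 else (size u).+1.
Proof.
rewrite /vdist; case: u => [|y u] //=; rewrite [y == x]eq_sym.
by case: (x == y) => /=; lia.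
Qed.

Lemma vdist1_r x u : vdist u [:: x] = if hb x u then (size u).-1 else (size u).+1.
Proof.
rewrite /vdist; case: u => [|y u] //=.
by case: (y == x) => /=; rewrite ?lcp_nil_r ?muln0 ?subn0; lia.
Qed.

Lemma hb_rcons x p g : hb x (rcons p g) = (head g p == x).
Proof. by case: p. Qed.

Lemma hb_p x p g : hb x p = (0 < size p) && (head g p == x).
Proof. by case: p. Qed.

Lemma d2mv_mkE p g up v : reduced (rcons p g) ->
  d2mv (mkE p g up) v = (2 * minn (vdist p v) (vdist (rcons p g) v)).+1.
Proof.
by move=> H; rewrite /d2mv term_mkE // init_mkE; case: up => //; rewrite minnC.
Qed.

Definition tyJ (a b : bool) : nat :=
  if a then (if b then 2 else 1) else (if b then 3 else 4).

Section Root.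
Variables (p : vert) (g x : 'I_3) (up eup : bool).
Hypothesis Hq : reduced (rcons p g).
Let H := head g p == x.
Let n := size p.
Hypothesis Hne : ~~ ((p == [::]) && H).

Let A := mkE p g up.
Let E := mkE [::] x eup.

Lemma rq1 : reduced (rcons [::] x). Proof. by []. Qed.

Lemma Hne' : (0 < n) || ~~ H.
Proof. by move: Hne; rewrite /n -size_eq0; case: (size p) => //. Qed.

Lemma root_same : same_edge A E = false.
Proof.
rewrite /same_edge opp_mkE //.
have key : forall e, (A == mkE [::] x e) = false.
  move=> e; apply/negbTE; apply/eqP; rewrite /A /mkE.
  move: Hne; rewrite /H.
  case: up; case: e => Hn /= [E1 E2].
  - move: E1 => /(congr1 size); rewrite size_rcons.
    move=> /eqP; rewrite eqSS size_eq0 => /eqP Hp.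
    by move: Hn; rewrite Hp /= E2 eqxx.
  - by move: E1 => /(congr1 size); rewrite size_rcons.
  - by move: Hq; rewrite E1 E2 reduced_rcons /= eqxx.
  - by move: Hn; rewrite E1 E2 /= eqxx.
by rewrite !key.
Qed.

Lemma vp0 : vdist p [::] = n. Proof. exact: vdist_nil_r. Qed.
Lemma vq0 : vdist (rcons p g) [::] = n.+1. Proof. by rewrite vdist_nil_r size_rcons. Qed.
Lemma v0p : vdist [::] p = n. Proof. exact: vdist_nil_l. Qed.
Lemma v0q : vdist [::] (rcons p g) = n.+1. Proof. by rewrite vdist_nil_l size_rcons. Qed.
Lemma vpx : vdist p [:: x] = if (0 < n) && H then n.-1 else n.+1.
Proof. by rewrite vdist1_r (hb_p _ _ g). Qed.
Lemma vxp : vdist [:: x] p = if (0 < n) && H then n.-1 else n.+1.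
Proof. by rewrite vdist1_l (hb_p _ _ g). Qed.
Lemma vqx : vdist (rcons p g) [:: x] = if H then n else n.+2.
Proof. by rewrite vdist1_r hb_rcons size_rcons. Qed.
Lemma vxq : vdist [:: x] (rcons p g) = if H then n else n.+2.
Proof. by rewrite vdist1_l hb_rcons size_rcons. Qed.

Definition Dr := if H then n else n.+1.

Lemma middist_root : middist A E = Dr.
Proof.
have := Hne'; rewrite /middist root_same /A /E !term_mkE // !init_mkE /Dr.
case: up; case: eup => /=;
  rewrite ?vp0 ?vq0 ?v0p ?v0q ?vpx ?vxp ?vqx ?vxq ?vdist_nil_l ?vdist_nil_r ?vdist_refl ?vdist1_l ?vdist1_r /=;
  case: H; rewrite ?andbT ?andbF ?orbF ?orbT /= => Hn; rewrite ?Hn /=; lia.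
Qed.

Lemma d2mvE v : d2mv E v = (2 * minn (vdist [::] v) (vdist [:: x] v)).+1.
Proof. by rewrite /E d2mv_mkE. Qed.

Lemma d2mvA v : d2mv A v = (2 * minn (vdist p v) (vdist (rcons p g) v)).+1.
Proof. by rewrite /A d2mv_mkE. Qed.

Ltac grind := have := Hne'; rewrite /on_geod middist_root d2mvA d2mvE /Dr;
  rewrite ?vp0 ?vq0 ?v0p ?v0q ?vpx ?vxp ?vqx ?vxq ?vdist_nil_l ?vdist_nil_r ?vdist_refl ?min0n ?minn0 /=;
  case: H; rewrite ?andbT ?andbF ?orbF ?orbT /=;
  let Hn := fresh "Hn" in intro Hn; rewrite ?Hn /=; lia.

Lemma og_p : on_geod A E p = true.
Proof. grind. Qed.
Lemma og_q : on_geod A E (rcons p g) = false.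
Proof. grind. Qed.
Lemma og_0 : on_geod A E [::] = ~~ H.
Proof. grind. Qed.
Lemma og_x : on_geod A E [:: x] = H.
Proof. grind. Qed.

Lemma termA : term A = if up then p else rcons p g. Proof. exact: term_mkE. Qed.
Lemma initA : init A = if up then rcons p g else p. Proof. exact: init_mkE. Qed.
Lemma termE : term E = if eup then [::] else [:: x]. Proof. by rewrite /E term_mkE. Qed.
Lemma initE : init E = if eup then [:: x] else [::]. Proof. by rewrite /E init_mkE. Qed.

Lemma type_root d j :
  has_type d j A E = (d == Dr) && (j == tyJ up (if eup then ~~ H else H)).
Proof.
rewrite /has_type valid_mkE // valid_mkE // middist_root /=.
case: (eqVneq d Dr) => [->|_]; last by [].
have Dr0 : (Dr == 0) = false.
  by have := Hne'; rewrite /Dr; case: H => //=; rewrite orbF; case: n.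
rewrite Dr0 /= termA initA termE initE.
case: up; case: eup; rewrite /= ?og_p ?og_q ?og_0 ?og_x;
  case: H; case: j => [|[|[|[|[|j]]]]]. all: by [].
Qed.
End Root.


Lemma term_opp B : valid B -> term (opp B) = init B.
Proof. by case: B => b g H; rewrite /term /opp /= vmulK. Qed.

Lemma init_opp B : init (opp B) = term B.
Proof. by []. Qed.

Lemma opp_eq A B : valid A -> valid B -> (opp A == opp B) = (A == B).
Proof.
move=> HA HB; apply/eqP/eqP => [E|-> //].
by rewrite -(opp_opp HA) E opp_opp.
Qed.

Lemma opp_eq2 A B : valid A -> valid B -> (opp A == B) = (A == opp B).
Proof.
move=> HA HB; apply/eqP/eqP => [<-|->]; by rewrite opp_opp.
Qed.

Lemma same_edge_opp A B : valid B -> same_edge A (opp B) = same_edge A B.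
Proof. by move=> HB; rewrite /same_edge opp_opp // orbC. Qed.

Lemma middist_opp A B : valid B -> middist A (opp B) = middist A B.
Proof.
move=> HB; rewrite /middist same_edge_opp // term_opp // init_opp.
by rewrite [minn (vdist (init A) _) _]minnC [minn (vdist (term A) _) _]minnC.
Qed.

Lemma d2mv_opp B v : valid B -> d2mv (opp B) v = d2mv B v.
Proof. by move=> HB; rewrite /d2mv term_opp // init_opp minnC. Qed.

Lemma on_geod_opp A B v : valid B -> on_geod A (opp B) v = on_geod A B v.
Proof. by move=> HB; rewrite /on_geod d2mv_opp // middist_opp. Qed.

Definition flip (j : nat) : nat :=
  match j with 1 => 2 | 2 => 1 | 3 => 4 | 4 => 3 | _ => 0 end.

Lemma has_type_flip d j A B : valid A -> valid B ->
  has_type d (flip j) A (opp B) = has_type d j A B.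
Proof.
move=> HA HB; rewrite /has_type valid_opp // HA HB middist_opp //.
rewrite !on_geod_opp // term_opp // init_opp opp_eq // opp_eq2 //.
by case: (d == 0); case: j => [|[|[|[|[|j]]]]].
Qed.

Lemma opp_neq A : valid A -> (opp A == A) = false.
Proof.
case: A => w g; rewrite /opp /term /valid /= => H; apply/negbTE.
rewrite xpair_eqE eqxx andbT; apply/eqP => E.
have := congr1 size E; case/lastP: w {H E} => [|w a] //.
case: (eqVneq a g) => [->|ne]; first by rewrite vmul_rcons size_rcons; lia.
by rewrite vmul_nrcons ?last_rcons // !size_rcons; lia.
Qed.

Lemma has_type_refl d j A : valid A ->
  has_type d j A A = (d == 0) && ((j == 1) || (j == 3)).
Proof.
move=> HA; rewrite /has_type HA /middist /same_edge eqxx /= [0 == d]eq_sym.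
case: (d == 0) => //; rewrite [A == opp A]eq_sym opp_neq //.
by case: j => [|[|[|[|[|j]]]]].
Qed.

Lemma has_type_oppself d j A : valid A ->
  has_type d j A (opp A) = (d == 0) && ((j == 2) || (j == 4)).
Proof.
move=> HA; rewrite /has_type HA valid_opp // /middist /same_edge opp_opp // eqxx orbT.
rewrite /= [0 == d]eq_sym; case: (d == 0) => //; rewrite opp_neq // eqxx.
by case: j => [|[|[|[|[|j]]]]].
Qed.

Lemma has_type_valid d j A B : has_type d j A B -> valid A /\ valid B.
Proof. by case/and4P. Qed.

Lemma has_type_eqAB d j A B : has_type d j A B ->
  (A == B) = (d == 0) && ((j == 1) || (j == 3)).
Proof.
move=> H; have [HA HB] := has_type_valid H.
case: (eqVneq A B) => [E|ne].
  by move: H; rewrite -E has_type_refl.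
move: H; rewrite /has_type HA HB /=.
case: (eqVneq d 0) => [->|//] /=.
case/andP => /eqP Hm.
move: ne; rewrite eq_sym => /negbTE ->.
by case: j => [|[|[|[|[|j]]]]].
Qed.


Lemma decomp C : valid C -> exists p g up, reduced (rcons p g) /\ C = mkE p g up.
Proof.
case: C => w g; rewrite /valid /=.
case/lastP: w => [|w a] H.
  by exists [::], g, false.
case: (eqVneq a g) => [E|ne].
  by exists w, g, true; rewrite -E.
exists (rcons w a), g, false; split => //.
by rewrite reduced_rcons H last_rcons ne orbT.
Qed.

Lemma valid_P c B : valid B -> valid (P c B).
Proof. by move=> H; apply: reduced_vmul. Qed.

Lemma tr_P x c B : reduced x -> valid B -> tr x (P c B) = P c (tr x B).
Proof. by move=> Hx HB; rewrite /tr /P /init /= mul_vmul. Qed.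

Lemma sum_neq (b h : 'I_3) (f : bool -> nat) :
  \sum_(c < 3 | c != b) f (h == c) =
  if h == b then f false + f false else f true + f false.
Proof.
rewrite big_mkcond !big_ord_recl big_ord0 /=.
case: b => [[|[|[|b]]] Hb] //; case: h => [[|[|[|h]]] Hh] //=;
  rewrite /bump /=; rewrite ?addn0 ?add0n; first [ by [] | by rewrite addnC ].
Qed.

Definition nd1 d j := if d == 0 then 1 else if (j == 1) || (j == 4) then d.-1 else d.+1.
Definition nj1 d j := if d == 0 then (if (j == 1) || (j == 3) then 3 else 2) else j.
Definition nd2 d j := if d == 0 then 1 else if (j == 1) || (j == 4) then d else d.+1.
Definition nj2 d j := if d == 0 then (if (j == 1) || (j == 3) then 3 else 2)
                      else if (j == 1) || (j == 2) then 2 else 3.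

Fixpoint F k r d j : nat :=
  if k is k'.+1 then
    sh true (fun r => F k' r d (flip j)) r + F k' r (nd1 d j) (nj1 d j)
      + F k' r (nd2 d j) (nj2 d j)
  else ((r == 0) && (d == 0) && ((j == 1) || (j == 3))).

Lemma main k : forall r d j A B, has_type d j A B -> npaths k r A B = F k r d j.
Proof.
elim: k => [|k IH] r d j A B H.
  by rewrite npaths0 (has_type_eqAB H) /= [in LHS]andbC andbA.
have [HA HB] := has_type_valid H.
rewrite npaths_last //.
set x := rev (init B).
have Hx : reduced x by rewrite reduced_rev.
have HB' : tr x B = mkE [::] B.2 false by rewrite /tr mulVl.
have HA' := valid_tr A Hx.
have [p [g [up [Hq EA]]]] := decomp HA'.
have H' : has_type d j (mkE p g up) (mkE [::] B.2 false).
  by rewrite -EA -HB' has_type_tr.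
have Hc : forall c, has_type (Dr p g c) (tyJ up (~~ (head g p == c))) A (P c B).
  move=> c; rewrite -(has_type_tr _ _ Hx HA (valid_P c HB)) tr_P // HB' EA.
  change (P c (mkE [::] B.2 false)) with (mkE [::] c true).
  case: (boolP ((p == [::]) && (head g p == c))) => Hpc.
    move/andP: Hpc => [/eqP Ep /eqP Ehc]; subst p; move: Ehc => /= Ehc; subst g.
    rewrite /Dr /= eqxx /=.
    case: up {EA H'}; first by rewrite has_type_refl.
    have E1 : ([:: c], c) = opp (mkE [::] c false) by rewrite opp_mkE.
    by rewrite E1 has_type_oppself.
  by rewrite type_root // !eqxx.
rewrite (bigD1 B.2) //= eqxx.
change (P B.2 B) with (opp B).
rewrite /nps (@sh_ext true _ (fun r => F k r d (flip j)) r); last first.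
  by move=> r'; apply: IH; rewrite has_type_flip.
rewrite -addnA; congr (_ + _).
pose f b := F k r (if b then size p else (size p).+1) (tyJ up (~~ b)).
rewrite (eq_bigr (fun c => f (head g p == c))); last first.
  by move=> c /negbTE ->; rewrite /sh (IH _ _ _ _ _ (Hc c)).
rewrite sum_neq /f; clear f.
case: (boolP ((p == [::]) && (head g p == B.2))) => Hpb.
  move/andP: Hpb => [/eqP Ep /eqP Ehc]; subst p; move: Ehc => /= Ehc; subst g.
  rewrite eqxx /=.
  case: up {EA Hc} H'.
    have E1 : mkE [::] B.2 false = opp (mkE [::] B.2 true) by rewrite opp_mkE.
    rewrite E1 has_type_oppself // => /andP[/eqP -> Hj].
    by rewrite /nd1 /nj1 /nd2 /nj2 /=; clear H IH; case: j Hj => [|[|[|[|[|j]]]]].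
  rewrite has_type_refl // => /andP[/eqP -> Hj].
  by rewrite /nd1 /nj1 /nd2 /nj2 /=; clear H IH; case: j Hj => [|[|[|[|[|j]]]]].
move: H'; rewrite type_root // => /andP[/eqP -> /eqP ->].
rewrite /Dr /nd1 /nj1 /nd2 /nj2.
case: (boolP (head g p == B.2)) => Hh /=.
  have Hp : (size p == 0) = false.
    by move: Hpb; rewrite Hh andbT size_eq0 => /negbTE.
  by rewrite Hp; clear EA Hc; case: up.
by clear EA Hc; case: up.
Qed.


Definition lt3 (m : nat) : 'I_3 :=
  if odd m then Ordinal (isT : 2 < 3) else Ordinal (isT : 1 < 3).

Fixpoint alt n : vert := if n is m.+1 then rcons (alt m) (lt3 m) else [::].

Lemma alt_size n : size (alt n) = n.
Proof. by elim: n => //= n IH; rewrite size_rcons IH. Qed.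

Lemma alt_red n : reduced (rcons (alt n) (lt3 n)).
Proof.
elim: n => // n IH /=.
rewrite reduced_rcons IH last_rcons orbC /lt3 /=.
by case: (odd n).
Qed.

Lemma head_rcons (y z : 'I_3) s : head y (rcons s z) = head z s.
Proof. by case: s. Qed.

Lemma alt_head n : head (lt3 n) (alt n) != ord0.
Proof.
elim: n => // n IH /=; rewrite head_rcons //.
Qed.

Lemma exists_type d j : 0 < j < 5 -> exists A B, has_type d j A B.
Proof.
move=> Hj.
case: d => [|n].
  have HA : valid ([::], ord0 : 'I_3) by [].
  case: j Hj => [|[|[|[|[|j]]]]] // _.
  - by exists ([::], ord0), ([::], ord0); rewrite has_type_refl.
  - by exists ([::], ord0), (opp ([::], ord0)); rewrite has_type_oppself.
  - by exists ([::], ord0), ([::], ord0); rewrite has_type_refl.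
  - by exists ([::], ord0), (opp ([::], ord0)); rewrite has_type_oppself.
have Hne : ~~ ((alt n == [::]) && (head (lt3 n) (alt n) == ord0)).
  by rewrite (negbTE (alt_head n)) andbF.
case: j Hj => [|[|[|[|[|j]]]]] // _.
- exists (mkE (alt n) (lt3 n) true), (mkE [::] ord0 false).
  by rewrite type_root ?alt_red // /Dr alt_size (negbTE (alt_head n)) /= eqxx.
- exists (mkE (alt n) (lt3 n) true), (mkE [::] ord0 true).
  by rewrite type_root ?alt_red // /Dr alt_size (negbTE (alt_head n)) /= eqxx.
- exists (mkE (alt n) (lt3 n) false), (mkE [::] ord0 true).
  by rewrite type_root ?alt_red // /Dr alt_size (negbTE (alt_head n)) /= eqxx.
- exists (mkE (alt n) (lt3 n) false), (mkE [::] ord0 false).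
  by rewrite type_root ?alt_red // /Dr alt_size (negbTE (alt_head n)) /= eqxx.
Qed.

Definition Fz k (r : int) d j := if r is Posz r' then F k r' d j else 0.

Lemma Gamma_F k r d j : 0 < j < 5 -> Gamma k r d j = Fz k r d j.
Proof.
move=> Hj; rewrite /Gamma /=; case: r => [r'|n] //=.
have [A [B HAB]] := exists_type d Hj.
have := epsilon_spec (inhabits (oedge0, oedge0)) (fun p : oedge * oedge => has_type d j p.1 p.2)
  (ex_intro _ (A, B) HAB).
by move=> /main ->.
Qed.

Lemma Fz_pred k r d j : Fz k (r - 1)%R d j =
  if r is Posz r' then sh true (fun r => F k r d j) r' else 0.
Proof.
case: r => [[|s]|n] //.
  have -> : (Posz s.+1 - 1)%R = Posz s by rewrite -addn1 PoszD GRing.addrK.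
  by [].
Qed.

Unset Implicit Arguments.

Theorem lemma2 (k : nat) (r : int) (d : nat) : (2 <= k)%N ->
  ((1 <= d)%N ->
     [/\ Gamma k r d 1 = (Gamma k.-1 (r - 1)%R d 2 + Gamma k.-1 r d.-1 1 + Gamma k.-1 r d 2)%N,
         Gamma k r d 2 = (Gamma k.-1 (r - 1)%R d 1 + 2 * Gamma k.-1 r d.+1 2)%N,
         Gamma k r d 3 = (Gamma k.-1 (r - 1)%R d 4 + 2 * Gamma k.-1 r d.+1 3)%N &
         Gamma k r d 4 = (Gamma k.-1 (r - 1)%R d 3 + Gamma k.-1 r d.-1 4 + Gamma k.-1 r d 3)%N])
  /\
  [/\ Gamma k r 0 1 = (Gamma k.-1 (r - 1)%R 0 2 + 2 * Gamma k.-1 r 1 3)%N,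
      Gamma k r 0 2 = (Gamma k.-1 (r - 1)%R 0 1 + 2 * Gamma k.-1 r 1 2)%N,
      Gamma k r 0 3 = (Gamma k.-1 (r - 1)%R 0 4 + 2 * Gamma k.-1 r 1 3)%N &
      Gamma k r 0 4 = (Gamma k.-1 (r - 1)%R 0 3 + 2 * Gamma k.-1 r 1 2)%N].
Proof.
case: k => [|k] // _; rewrite [k.+1.-1]/=.
rewrite !Gamma_F // !Fz_pred.
case: r => [r|n]; last by [].
rewrite /Fz /= /nd1 /nj1 /nd2 /nj2 /=.
split; last by split; lia.
move=> Hd; have -> : (d == 0) = false by case: d Hd.
by rewrite /=; split; lia.
Qed.
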